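(* Let $u$ be a finite game with player set $\mathcal V$ and strategy profile space $\mathcal X$, and let $x^*\in\mathcal X$ be a Nash equilibrium of $u$. Then for every nonempty subset of players $\mathcal R\subseteq\mathcal V$, the projection $x^*_{\mathcal R}$ is a Nash equilibrium of every game $\tilde u\in\mathcal U_{\mathcal R}$ such that $$\|u-\tilde u\|_\infty\le\mu_u(x^* ).$$
   Context: A finite game consists of a finite nonempty player set $\mathcal V$, finite nonempty action sets $\mathcal A_i$, profile space $\mathcal X=\prod_{i\in\mathcal V}\mathcal A_i$, and utilities $u_i:\mathcal X\to\mathbb R$; $\mathcal U$ is the space of all such games, normed by $\|\delta\|_\infty=\max_{i\in\mathcal V}\max_{x\in\mathcal X}|\delta_i(x)|$. Profiles $x,y$ are $i$-comparable, $x\sim_i y$, if they coincide except possibly in entry $i$; for a game $v$, $\chi^v_i(x)=\min_{y\sim_i x,\,y\neq x}\{v_i(x)-v_i(y)\}$, and a (pure strategy) Nash equilibrium of $v$ is a profile $x^*$ with $\chi^v_i(x^* )\ge0$ for every player $i$. The margin of robustness $\mu_u(x^* )$ of a Nash equilibrium $x^*$ of $u$ is the infimum of $\|\delta\|_\infty$ over perturbations $\delta\in\mathcal U$ such that $x^*$ is not a Nash equilibrium of $u+\delta$. For nonempty $\mathcal R\subseteq\mathcal V$, $\mathcal X_{\mathcal R}=\prod_{i\in\mathcal R}\mathcal A_i$, $x_{\mathcal R}$ denotes the restriction of $x\in\mathcal X$ to the coordinates in $\mathcal R$, and $\mathcal U_{\mathcal R}$ is the set of games with player set $\mathcal R$ and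 profile space $\mathcal X_{\mathcal R}$. For $u\in\mathcal U$ and $\tilde u\in\mathcal U_{\mathcal R}$, $\|u-\tilde u\|_\infty=\max_{i\in\mathcal R}\max_{x\in\mathcal X}|u_i(x)-\tilde u_i(x_{\mathcal R})|$. *)

(* Defs.v *)
From HB Require Import structures.
From mathcomp Require Import all_boot all_order all_algebra.
From mathcomp Require Import classical_sets reals constructive_ereal ereal.
Set Implicit Arguments. Unset Strict Implicit.
 Unset Printing Implicit Defensive.
Import Order.TTheory GRing.Theory Num.Theory.
Local Open Scope ring_scope.
Local Open Scope classical_set_scope.

Definition profile (P : finType) (A : P -> finType) := {dffun forall i : P, A i}.

Definition game (R : realType) (P : finType) (A : P -> finType) :=
  P -> profile A -> R.

Definition icomparable (P : finType) (A : P -> finType) (i : P)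
  (x y : profile A) : Prop := forall j, j != i -> x j = y j.

(* chi^v_i(x) = min_{y ~_i x, y <> x} (v_i(x) - v_i(y)); the Nash condition
   chi^v_i(x) >= 0 for all i (min over empty set = +oo) unfolds to: *)
Definition is_Nash (R : realType) (P : finType) (A : P -> finType)
  (v : game R A) (x : profile A) : Prop :=
  forall i (y : profile A), icomparable i y x -> y != x -> v i y <= v i x.

Definition game_add (R : realType) (P : finType) (A : P -> finType)
  (u d : game R A) : game R A := fun i x => u i x + d i x.

Definition game_norm (R : realType) (P : finType) (A : P -> finType)
  (d : game R A) : R :=
  \big[Num.max/0]_(i : P) \big[Num.max/0]_(x : profile A) `|d i x|.

(* margin of robustness, as an extended real (inf of empty set = +oo) *)
Definition margin (R : realType) (P : finType) (A : P -> finType)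
  (u : game R A) (x : profile A) : \bar R :=
  ereal_inf [set (game_norm d)%:E | d in [set d : game R A |
                                             ~ is_Nash (game_add u d) x]].

Definition subP (P : finType) (Rs : {set P}) : finType := {i : P | i \in Rs}.
Arguments subP {P} Rs.

Definition subA (P : finType) (A : P -> finType) (Rs : {set P})
  : subP Rs -> finType := fun j => A (val j).
Arguments subA {P} A Rs.

Definition restrict (P : finType) (A : P -> finType) (Rs : {set P})
  (x : profile A) : profile (subA A Rs) :=
  [ffun j : subP Rs => (x (val j) : subA A Rs j)].

Definition sub_dist (R : realType) (P : finType) (A : P -> finType)
  (Rs : {set P}) (u : game R A) (ut : game R (subA A Rs)) : R :=
  \big[Num.max/0]_(i : subP Rs) \big[Num.max/0]_(x : profile A)
     `|u (val i) x - ut i (restrict Rs x)|.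

(* Main.v *)
Require Import Defs.
From HB Require Import structures.
From mathcomp Require Import all_boot all_order all_algebra.
From mathcomp Require Import classical_sets reals constructive_ereal ereal.
From mathcomp Require Import lra.
Import Order.TTheory GRing.Theory Num.Theory.
Local Open Scope ring_scope.
Local Open Scope classical_set_scope.

Set Implicit Arguments.
Section Aux.
Variables (P : finType) (A : P -> finType) (Rs : {set P}).

Definition extf (x : profile A) (z : profile (subA A Rs)) (k : P) : A k :=
  match (k \in Rs) =P true with
  | ReflectT h => z (@exist P (fun i => i \in Rs) k h)
  | ReflectF _ => x k
  end.

Definition ext (x : profile A) (z : profile (subA A Rs)) : profile A :=
  finfun (extf x z).

Lemma extE_in x z k (h : k \in Rs) : ext x z k = z (@exist P (fun i => i \in Rs) k h).
Proof.
rewrite /ext ffunE /extf; case: eqP => [h'|nh]; last by rewrite h in nh.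
by rewrite (bool_irrelevance h' h).
Qed.

Lemma extE_out x z k : k \notin Rs -> ext x z k = x k.
Proof.
move=> nh; rewrite /ext ffunE /extf; case: eqP => [h'|//].
by rewrite h' in nh.
Qed.

Lemma restrict_ext x z : restrict Rs (ext x z) = z.
Proof.
apply/ffunP => -[k h]; rewrite ffunE /=.
by rewrite (extE_in x z h).
Qed.
End Aux.

Theorem proposition3 (R : realType) (P : finType) (A : P -> finType)
  (hP : (0 < #|P|)%N) (hA : forall i, (0 < #|A i|)%N)
  (u : game R A) (xs : profile A) :
  is_Nash u xs ->
  forall (Rs : {set P}), Rs != finset.set0 ->
  forall ut : game R (subA A Rs),
    ((sub_dist u ut)%:E <= margin u xs)%E ->
    is_Nash ut (restrict Rs xs).
Proof.
move=> hN Rs _ ut hm j y' hc hne.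
rewrite leNgt; apply/negP => hlt.
set xr := restrict Rs xs in hc hne hlt.
set e := sub_dist u ut in hm.
set y := ext xs y'.
have ry : restrict Rs y = y' by rewrite restrict_ext.
have yne : y != xs.
  by apply: contra hne => /eqP ye; rewrite -ry ye.
have yc : icomparable (val j) y xs.
  move=> k hk; case: (boolP (k \in Rs)) => kin; last by rewrite extE_out.
  rewrite /y (extE_in _ _ kin).
  rewrite hc; last by apply: contra hk => /eqP <-.
  by rewrite /xr ffunE.
have bnd : forall z, `|u (val j) z - ut j (restrict Rs z)| <= e.
  move=> z; apply: le_trans (le_bigmax _ _ j).
  exact: (le_bigmax _ (fun z => `|u (val j) z - ut j (restrict Rs z)|) z).
have ha := bnd xs; have hb := bnd y; rewrite ry in hb.
have hD := hN _ _ yc yne.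
set a := u (val j) xs - ut j xr in ha.
set b := u (val j) y - ut j y' in hb.
set g := ut j y' - ut j xr.
set D := u (val j) xs - u (val j) y.
set c := D / 2 + g / 4.
have gp : 0 < g by rewrite /g subr_gt0.
have Dp : 0 <= D by rewrite /D subr_ge0.
have cp : 0 <= c by rewrite /c; lra.
have ce : c < e.
  have Da : D = a - b - g by rewrite /D /a /b /g; lra.
  move: ha hb; rewrite !ler_norml => /andP[? ?] /andP[? ?].
  rewrite /c Da; lra.
pose d : game R A := fun i z =>
  if i == val j then (if z == y then c else if z == xs then - c else 0) else 0.
have dn : game_norm d <= c.
  apply: bigmax_le => // i _; apply: bigmax_le => // z _.
  rewrite /d; case: eqP => _; last by rewrite normr0.
  case: eqP => _; first by rewrite ger0_norm.
  case: eqP => _; last by rewrite normr0.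
  by rewrite normrN ger0_norm.
have nN : ~ is_Nash (game_add u d) xs.
  move=> /(_ (val j) y yc yne); rewrite /game_add /d eqxx eqxx.
  have -> : (xs == y) = false by rewrite eq_sym (negbTE yne).
  rewrite eqxx; move: cp; rewrite /c /D; lra.
move/ereal_infP: hm => /(_ (game_norm d)%:E).
have : [set (game_norm d0)%:E | d0 in [set d0 : game R A |
            ~ is_Nash (game_add u d0) xs]] (game_norm d)%:E.
  by exists d.
move=> H /(_ H); rewrite lee_fin => hed.
by move: (le_lt_trans hed (le_lt_trans dn ce)); rewrite ltxx.
Qed.
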